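(* Let $V$ be a simple vertex operator algebra containing a rational subVOA $W$ whose Virasoro element equals that of $V$. Then $V$ is projective as a $V$-module.
   Context: A VOA is rational if all its modules are completely reducible. $\mathrm{mod}(V)$ is the category of $\mathbb{N}$-graded $V$-modules with composition series of finite length; $P\in\mathrm{mod}(V)$ is projective if every $V$-epimorphism $X\to P$ with $X\in\mathrm{mod}(V)$ splits. *)

(* Defs.v *)
From HB Require Import structures.
From mathcomp Require Import all_boot all_order all_algebra.
From mathcomp Require Import complex reals.
Set Implicit Arguments.
Unset Strict Implicit.
Unset Printing Implicit Defensive.
Import Order.TTheory GRing.Theory Num.Theory.
Local Open Scope ring_scope.

Section VOADefs.
Variable C : fieldType.

Definition gbinom (m : int) (i : nat) : C :=
  (\prod_(j < i) (m%:~R - j%:R)) / (i`!)%:R.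

Section Subspaces.
Variable M : lmodType C.

Definition subspace (U : M -> Prop) : Prop :=
  U 0 /\ (forall a x y, U x -> U y -> U (a *: x + y)).

Definition direct_sum (I : eqType) (F : I -> M -> Prop) : Prop :=
  (forall w : M, exists (s : seq I) (f : I -> M),
      (forall i, i \in s -> F i (f i)) /\ w = \sum_(i <- s) f i) /\
  (forall (s : seq I) (f : I -> M), uniq s ->
      (forall i, i \in s -> F i (f i)) -> \sum_(i <- s) f i = 0 ->
      forall i, i \in s -> f i = 0).
End Subspaces.

Section Vertex.
Variables (V : lmodType C) (Y : V -> int -> V -> V) (vac om : V).
(* Y u n v = u_n v ;  L(n) = om_(n+1) *)
Definition Lop (n : int) (v : V) : V := Y om (n + 1) v.

(* Borcherds (Jacobi) identity for an action YM : V -> int -> M -> M,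
   the (finite) sums being truncated at any bound k beyond which all
   terms vanish. *)
Definition borcherds (M : lmodType C) (YM : V -> int -> M -> M)
  (u v : V) (w : M) : Prop :=
  forall (m n l : int) (k : nat),
    (forall i : nat, (k <= i)%N ->
       Y u (l + i%:Z) v = 0 /\ YM v (n + i%:Z) w = 0 /\ YM u (m + i%:Z) w = 0) ->
    \sum_(i < k) gbinom m i *: YM (Y u (l + i%:Z) v) (m + n - i%:Z) w =
    \sum_(i < k) ((-1) ^+ i * gbinom l i) *:
        (YM u (m + l - i%:Z) (YM v (n + i%:Z) w)
         - (-1) ^+ (absz l) *: YM v (n + l - i%:Z) (YM u (m + i%:Z) w)).

(* weak module for the vertex subalgebra S (S = setT gives V-modules) *)
Definition is_module (S : V -> Prop) (M : lmodType C)
  (YM : V -> int -> M -> M) : Prop :=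
  (forall u n a w w', S u -> YM u n (a *: w + w') = a *: YM u n w + YM u n w') /\
  (forall u u' n a w, S u -> S u' ->
      YM (a *: u + u') n w = a *: YM u n w + YM u' n w) /\
  (forall u w, S u -> exists N : int, forall n, N <= n -> YM u n w = 0) /\
  (forall n w, YM vac n w = if n == -1 then w else 0) /\
  (forall u v w, S u -> S v -> borcherds YM u v w).

Definition is_VOA (c : C) : Prop :=
  (forall u n a v v', Y u n (a *: v + v') = a *: Y u n v + Y u n v') /\
  (forall u u' n a v, Y (a *: u + u') n v = a *: Y u n v + Y u' n v) /\
  (forall u v, exists N : int, forall n, N <= n -> Y u n v = 0) /\
  (forall n v, Y vac n v = if n == -1 then v else 0) /\
  (forall u, Y u (-1) vac = u) /\
  (forall u (n : int), 0 <= n -> Y u n vac = 0) /\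
  (forall u v w, borcherds Y u v w) /\
  (forall (m n : int) v,
     Lop m (Lop n v) - Lop n (Lop m v) =
     (m - n)%:~R *: Lop (m + n) v +
     ((if m + n == 0 then (m ^+ 3 - m)%:~R / 12%:R else 0) * c) *: v) /\
  (forall u n v, Y (Lop (-1) u) n v = - n%:~R *: Y u (n - 1) v) /\
  (forall v, exists s : seq (int * V),
      (forall p, p \in s -> Lop 0 p.2 = p.1%:~R *: p.2) /\
      v = \sum_(p <- s) p.2) /\
  (forall n : int, exists s : seq V, forall v, Lop 0 v = n%:~R *: v ->
      exists a : nat -> C, v = \sum_(i < size s) a i *: s`_i) /\
  (exists N : int, forall (n : int) v, n < N -> Lop 0 v = n%:~R *: v -> v = 0).

Definition subVOA_same_virasoro (W : V -> Prop) : Prop :=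
  subspace W /\ W vac /\ W om /\
  (forall u v n, W u -> W v -> W (Y u n v)).

Section Modules.
Variables (S : V -> Prop) (M : lmodType C) (YM : V -> int -> M -> M).

Definition submodule (U : M -> Prop) : Prop :=
  subspace U /\ (forall u n w, S u -> U w -> U (YM u n w)).

Definition irreducible_submodule (U : M -> Prop) : Prop :=
  submodule U /\ (exists w, U w /\ w <> 0) /\
  (forall U', submodule U' -> (forall w, U' w -> U w) ->
     (forall w, U' w -> w = 0) \/ (forall w, U w -> U' w)).

(* N-gradable (admissible) module: M = (+)_{n in N} M(n) with
   u_m M(n) <= M(wt u - m - 1 + n) for homogeneous u; M(n) := 0 for n < 0 *)
Definition ngradable : Prop :=
  exists G : int -> M -> Prop,
    (forall n, subspace (G n)) /\
    (forall n w, n < 0 -> G n w -> w = 0) /\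
    direct_sum G /\
    (forall u (k m n : int) w, S u -> Lop 0 u = k%:~R *: u -> G n w ->
        G (k - m - 1 + n) (YM u m w)).

Definition completely_reducible : Prop :=
  exists (I : eqType) (F : I -> M -> Prop),
    (forall i, irreducible_submodule (F i)) /\ direct_sum F.

Definition has_composition_series : Prop :=
  exists (k : nat) (Ms : nat -> M -> Prop),
    (forall i, submodule (Ms i)) /\
    (forall w, Ms 0 w <-> w = 0) /\ (forall w, Ms k w) /\
    (forall i, (i < k)%N ->
       (forall w, Ms i w -> Ms i.+1 w) /\
       (exists w, Ms i.+1 w /\ ~ Ms i w) /\
       (forall U, submodule U -> (forall w, Ms i w -> U w) ->
          (forall w, U w -> Ms i.+1 w) ->
          (forall w, U w -> Ms i w) \/ (forall w, Ms i.+1 w -> U w))).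
End Modules.

Definition module_hom (S : V -> Prop) (M1 M2 : lmodType C)
  (Y1 : V -> int -> M1 -> M1) (Y2 : V -> int -> M2 -> M2) (f : M1 -> M2) :=
  (forall a x y, f (a *: x + y) = a *: f x + f y) /\
  (forall u n x, S u -> f (Y1 u n x) = Y2 u n (f x)).

Definition rational_VOA (W : V -> Prop) : Prop :=
  forall (M : lmodType C) (YM : V -> int -> M -> M),
    is_module W YM -> ngradable W YM -> completely_reducible W YM.

Definition simple_VOA : Prop :=
  (exists v : V, v <> 0) /\
  (forall U, submodule (fun _ => True) Y U ->
     (forall w, U w -> w = 0) \/ (forall w, U w)).

Definition setTV : V -> Prop := fun _ => True.

Definition in_modV (M : lmodType C) (YM : V -> int -> M -> M) : Prop :=
  is_module setTV YM /\ ngradable setTV YM /\ has_composition_series setTV YM.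

Definition projective_modV (P : lmodType C) (YP : V -> int -> P -> P) : Prop :=
  in_modV YP /\
  forall (X : lmodType C) (YX : V -> int -> X -> X) (f : X -> P),
    in_modV YX -> module_hom setTV YX YP f -> (forall p, exists x, f x = p) ->
    exists g : P -> X, module_hom setTV YP YX g /\ (forall p, f (g p) = p).
End Vertex.
End VOADefs.

(* Main.v *)
Require Import Defs.
From mathcomp Require Import all_boot all_order all_algebra.
From mathcomp Require Import complex reals.
From mathcomp Require Import zify ring.
From Stdlib Require Import Classical.
Set Implicit Arguments. Unset Strict Implicit. Unset Printing Implicit Defensive.
Import Order.TTheory GRing.Theory Num.Theory.
Local Open Scope ring_scope.

Section Lin.
Variable (K : fieldType).
Definition islin (M N : lmodType K) (phi : M -> N) :=
  forall a x y, phi (a *: x + y) = a *: phi x + phi y.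

Variables (M N : lmodType K) (phi : M -> N).
Hypothesis Hl : islin phi.
Lemma lin0 : phi 0 = 0.
Proof.
have := Hl 1 0 0; rewrite !scale1r addr0 => /(congr1 (fun t => t - phi 0)).
by rewrite addrK subrr => <-.
Qed.
Lemma linD x y : phi (x + y) = phi x + phi y.
Proof. by have := Hl 1 x y; rewrite !scale1r. Qed.
Lemma linZ a x : phi (a *: x) = a *: phi x.
Proof. by have := Hl a x 0; rewrite !addr0 lin0 addr0. Qed.
Lemma linN x : phi (- x) = - phi x.
Proof. by rewrite -scaleN1r linZ scaleN1r. Qed.
Lemma linB x y : phi (x - y) = phi x - phi y.
Proof. by rewrite linD linN. Qed.
Lemma lin_sum (I : Type) (s : seq I) (P : pred I) (F : I -> M) :
  phi (\sum_(i <- s | P i) F i) = \sum_(i <- s | P i) phi (F i).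
Proof.
elim: s => [|a s IH]; first by rewrite !big_nil lin0.
by rewrite !big_cons; case: (P a); rewrite ?linD IH.
Qed.
End Lin.

Lemma sum_first (K : fieldType) (M : lmodType K) (k : nat) (F : nat -> M) :
  (0 < k)%N -> (forall i : nat, (0 < i)%N -> F i = 0) ->
  \sum_(i < k) F i = F 0%N.
Proof.
case: k => // k _ H; rewrite big_ord_recl big1 ?addr0 // => i _; exact: H.
Qed.

Lemma sum_pick (K : fieldType) (M : lmodType K) (k j : nat) (F : nat -> M) :
  (j < k)%N -> (forall i : nat, i != j -> F i = 0) ->
  \sum_(i < k) F i = F j.
Proof.
move=> jk H; rewrite (bigD1 (Ordinal jk)) //= big1 ?addr0 // => i /eqP ne.
apply: H; apply/eqP => E; apply: ne; apply: val_inj; exact: E.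
Qed.

Section GB.
Variable K : numFieldType.
Lemma gbinomS (m : int) (i : nat) :
  gbinom K m i.+1 = gbinom K m i * (m%:~R - i%:R) / (i.+1)%:R.
Proof.
rewrite /gbinom big_ord_recr /= factS natrM invfM; ring.
Qed.
Lemma gbinom_0 m : gbinom K m 0 = 1.
Proof. by rewrite /gbinom big_ord0 fact0 divr1. Qed.
Lemma gbinom0 i : (0 < i)%N -> gbinom K 0 i = 0.
Proof. by case: i => // i _; rewrite gbinomS; elim: i => [|i IH]; rewrite ?gbinom_0 ?gbinomS; [rewrite subrr mulr0 mul0r|rewrite IH !mul0r]. Qed.
Lemma gbinom1 i : (1 < i)%N -> gbinom K 1 i = 0.
Proof.
case: i => // [[|i]] // _; elim: i => [|i IH].
  by rewrite gbinomS subrr mulr0 mul0r.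
by rewrite gbinomS IH !mul0r.
Qed.
Lemma gbinom11 : gbinom K 1 1 = 1.
Proof. by rewrite gbinomS gbinom_0 subr0 mul1r divff ?oner_eq0. Qed.
Lemma gbinomm2 i : gbinom K (-2) i = (-1) ^+ i * (i.+1)%:R.
Proof.
elim: i => [|i IH]; first by rewrite gbinom_0 expr0 mul1r.
rewrite gbinomS IH exprS.
have h : (i%:R + 1) != 0 :> K by rewrite natr1 pnatr_eq0.
have e1 : (i.+1)%:R = i%:R + 1 :> K by rewrite natr1.
have e2 : (i.+2)%:R = i%:R + 2 :> K by rewrite -addn2 natrD.
have e3 : (-2)%:~R = - 2 :> K by [].
rewrite e1 e2 e3; field; exact: h.
Qed.
End GB.

Unset Implicit Arguments.
Section VOA.
Variables (R : realType) (V : lmodType R[i]) (Y : V -> int -> V -> V) (vac om : V) (c : R[i]).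
Hypothesis HV : is_VOA Y vac om c.

Lemma Ylin u n : islin (Y u n).
Proof. by case: HV => H _ a x y; apply: H. Qed.
Lemma Ylinl n v : islin (fun u => Y u n v).
Proof. by case: HV => _ [H _] a x y; apply: H. Qed.
Lemma Ytr u v : exists N : int, forall n, N <= n -> Y u n v = 0.
Proof. by case: HV => _ [_ [H _]]. Qed.
Lemma Yvac n v : Y vac n v = if n == -1 then v else 0.
Proof. by case: HV => _ [_ [_ [H _]]]. Qed.
Lemma creat u : Y u (-1) vac = u.
Proof. by case: HV => _ [_ [_ [_ [H _]]]]. Qed.
Lemma creat0 u (n : int) : 0 <= n -> Y u n vac = 0.
Proof. by case: HV => _ [_ [_ [_ [_ [H _]]]]]; apply: H. Qed.
Lemma Ybor u v w : borcherds Y Y u v w.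
Proof. by case: HV => _ [_ [_ [_ [_ [_ [H _]]]]]]. Qed.
Lemma Yder u n v : Y (Lop Y om (-1) u) n v = - n%:~R *: Y u (n - 1) v.
Proof. by case: HV => _ [_ [_ [_ [_ [_ [_ [_ [H _]]]]]]]]. Qed.
Lemma L1_vac u : Y om 0 u = Y u (-2) vac.
Proof.
have := Yder u (-1) vac; rewrite creat /Lop /= => ->.
have -> : (-1 - 1 : int) = -2 by [].
by rewrite mulrNz mulr1z opprK scale1r.
Qed.

Section Mod.
Variables (X : lmodType R[i]) (YX : V -> int -> X -> X).
Hypothesis Hm : is_module Y vac (@setTV _ V) YX.

Lemma YXlin u n : islin (YX u n).
Proof. by case: Hm => H _ a x y; apply: H. Qed.
Lemma YXlinl n x : islin (fun u => YX u n x).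
Proof. by case: Hm => _ [H _] a u u'; apply: H. Qed.
Lemma YXtr u x : exists N : int, forall n, N <= n -> YX u n x = 0.
Proof. by case: Hm => _ [_ [H _]]; apply: H. Qed.
Lemma YXvac n x : YX vac n x = if n == -1 then x else 0.
Proof. by case: Hm => _ [_ [_ [H _]]]. Qed.
Lemma YXbor u v x : borcherds Y YX u v x.
Proof. by case: Hm => _ [_ [_ [_ H]]]; apply: H. Qed.
Lemma YX0 u n : YX u n 0 = 0.
Proof. exact: lin0 (YXlin u n). Qed.

Lemma mod_der u (j : nat) x :
  YX (Y u (-2) vac) (j.+1)%:Z x = - (j.+1)%:R *: YX u j%:Z x.
Proof.
have [N HN] := YXtr u x.
have B := YXbor u vac x 0 (j.+1)%:Z (-2) ((absz N) + j).+2.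
lapply B; clear B; last first.
  move=> i hi; split; first by apply: creat0; lia.
  split; last by apply: HN; lia.
  by rewrite YXvac; case: eqP => // ?; lia.
rewrite big_ord_recl big1 ?addr0; last first.
  by move=> i _; rewrite gbinom0 ?scale0r.
have jk : (j < ((absz N) + j).+2)%N by lia.
rewrite (bigD1 (Ordinal jk)) //= big1 ?addr0; last first.
  move=> i /eqP ne; rewrite YXvac; case: eqP => [?|_]; first by lia.
  rewrite YX0 YXvac; case: eqP => [?|_]; last by rewrite scaler0 subrr scaler0.
  exfalso; apply: ne; apply: val_inj => /=; lia.
rewrite gbinom_0 scale1r YXvac; case: eqP => [?|_]; first by lia.
rewrite YX0 YXvac; case: eqP => [_|?]; last by lia.
rewrite gbinomm2 /= !add0r add0n expr2 mulrN1 opprK scale1r => ->.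
rewrite scalerN -scaleNr; congr (_ *: _).
by rewrite mulrA -exprD addnn -signr_odd odd_double expr0 mul1r.
Qed.

Lemma L1_comm u n x : YX om 0 x = 0 -> YX (Y om 0 u) n x = YX om 0 (YX u n x).
Proof.
move=> Hx.
have [N1 H1] := Ytr om u; have [N2 H2] := YXtr u x; have [N3 H3] := YXtr om x.
have B := YXbor om u x 0 n 0 (absz N1 + absz (N2 - n) + absz N3).+1.
lapply B; clear B; last first.
  move=> i hi; split; first by apply: H1; lia.
  split; first by apply: H2; lia.
  by apply: H3; lia.
rewrite big_ord_recl big1 ?addr0; last first.
  by move=> i _; rewrite gbinom0 ?scale0r.
rewrite big_ord_recl big1 ?addr0; last first.
  by move=> i _; rewrite gbinom0 ?mulr0 ?scale0r.
rewrite /= !gbinom_0 expr0 mulr1 !scale1r add0r Hx YX0 subr0.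
by [].
Qed.

Lemma vaclike x : YX om 0 x = 0 -> forall u (n : nat), YX u n%:Z x = 0.
Proof.
move=> Hx u; have [N HN] := YXtr u x.
suff H : forall d n : nat, (absz N <= n + d)%N -> YX u n%:Z x = 0.
  by move=> n; apply: (H (absz N)); lia.
elim=> [|d IH] n hn; first by apply: HN; lia.
have h1 := IH n.+1 ltac:(lia).
have := L1_comm u (n.+1)%:Z x Hx; rewrite h1 YX0 L1_vac mod_der => /eqP.
rewrite scaler_eq0 oppr_eq0 pnatr_eq0 /= => /eqP //.
Qed.

Lemma vac_hom x : (forall u (n : nat), YX u n%:Z x = 0) ->
  forall u v n0, YX (Y u n0 v) (-1) x = YX u n0 (YX v (-1) x).
Proof.
move=> Hx u v n0.
have [N1 H1] := Ytr u v.
have B := YXbor u v x 0 (-1) n0 (absz (N1 - n0)).+1.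
lapply B; clear B; last first.
  move=> i hi; split; first by apply: H1; lia.
  split; last by have := Hx u i; rewrite add0r.
  case: i hi => // i _; have -> : (-1 + (i.+1)%:Z) = i%:Z by lia.
  exact: Hx.
rewrite big_ord_recl big1 ?addr0; last first.
  by move=> i _; rewrite gbinom0 ?scale0r.
rewrite big_ord_recl big1 ?addr0; last first.
  by move=> i _; rewrite /= add0r Hx YX0 add0r Hx YX0 !scaler0 oppr0 scaler0.
rewrite /= !gbinom_0 expr0 mul1r !scale1r add0r.
have e : (0 - 1 : int) = -1 by [].
by rewrite add0r (Hx u 0%N) YX0 scaler0 subr0.
Qed.
End Mod.

Section Compl.
Variables (W : V -> Prop) (X : lmodType R[i]) (YX : V -> int -> X -> X).
Hypothesis Hm : is_module Y vac (@setTV _ V) YX.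
Variables (f : X -> V).
Hypothesis Hfl : islin f.
Hypothesis Hfh : forall u n x, f (YX u n x) = Y u n (f x).
Variables (I : eqType) (F : I -> X -> Prop).
Hypothesis HF : forall i, irreducible_submodule W YX (F i).

Lemma compl (s : seq I) (h : I -> X) : (forall i, i \in s -> F i (h i)) ->
  exists C, submodule W YX C /\ (forall c, C c -> f c = 0 -> c = 0) /\
    exists z, C z /\ f z = f (\sum_(i <- s) h i).
Proof.
elim: s => [|j s IH] Hs.
  exists (fun w => w = 0); split.
    split; first split => //.
      by move=> a x y -> ->; rewrite scaler0 addr0.
    by move=> u n w _ ->; exact: YX0.
  split; first by move=> ? ->.
  by exists 0; split => //; rewrite big_nil.
have [C [[[HC0 HCl] HCY] [Cinj [z [Cz fz]]]]] : exists C, submodule W YX C /\ (forall c, C c -> f c = 0 -> c = 0) /\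
    exists z, C z /\ f z = f (\sum_(i <- s) h i).
  by apply: IH => i hi; apply: Hs; rewrite inE hi orbT.
have Hj : F j (h j) by apply: Hs; rewrite inE eqxx.
have [[[HF0 HFl] HFY] [_ HFmax]] := HF j.
have fD := linD Hfl; have fZ := linZ Hfl; have f0 := lin0 Hfl.
pose D := fun w => exists a b, C a /\ F j b /\ w = a + b.
case: (classic (forall d, D d -> f d = 0 -> d = 0)) => [Dinj|Dn].
  exists D; split.
    split; first split.
        by exists 0, 0; rewrite addr0.
      move=> a x y [a1 [b1 [h1 [h1' ->]]]] [a2 [b2 [h2 [h2' ->]]]].
      exists (a *: a1 + a2), (a *: b1 + b2); split; first exact: HCl.
      split; first exact: HFl.
      by rewrite scalerDr -!addrA; congr (_ + _); rewrite addrCA.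
    move=> u n w Wu [a [b [ha [hb ->]]]].
    exists (YX u n a), (YX u n b); split; first exact: HCY.
    split; first exact: HFY.
    exact: (linD (YXlin X YX Hm u n)).
  split => //; exists (z + h j); split; first by exists z, (h j).
  by rewrite big_cons fD fz fD addrC.
have [d hd] := not_all_ex_not _ _ Dn.
have Dd : D d by apply: NNPP => H; apply: hd => /H.
have fd : f d = 0 by apply: NNPP => H; apply: hd => _ /H.
have dn' : d <> 0 by move=> e; apply: hd => _ _.
have [a [b [ha [hb ed]]]] := Dd.
pose U := fun w => F j w /\ exists a', C a' /\ f w = f a'.
have Usub : submodule W YX U.
  split; first split.
      by split => //; exists 0; split.
    move=> c0 x y [Fx [ax [Cax fx]]] [Fy [ay [Cay fy]]].
    split; first exact: HFl.
    by exists (c0 *: ax + ay); split; [exact: HCl | rewrite !fD !fZ fx fy].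
  move=> u n w Wu [Fw [aw [Caw fw]]]; split; first exact: HFY.
  by exists (YX u n aw); split; [exact: HCY | rewrite !Hfh fw].
case: (HFmax U Usub (fun w (hw : U w) => proj1 hw)) => [U0|UF].
  exfalso; apply: dn'.
  have Ub : U b.
    split => //; exists (- a); split.
      by have := HCl (-1) a 0 ha HC0; rewrite addr0 scaleN1r.
    have := fd; rewrite ed fD addrC => /eqP; rewrite addr_eq0 => /eqP ->.
    by rewrite -scaleN1r fZ scaleN1r.
  have b0 := U0 b Ub; rewrite ed b0 addr0.
  by apply: Cinj => //; rewrite -(addr0 a) -b0 -ed.
have [_ [a' [Ca' fa']]] := UF (h j) Hj.
exists C; split; first by split; first split.
split => //; exists (z + a'); split.
  by have := HCl 1 z a' Cz Ca'; rewrite scale1r.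
by rewrite big_cons fD fz fD -fa' addrC.
Qed.
End Compl.


Lemma Ylow : exists N : int, forall (n : int) v, n < N -> Lop Y om 0 v = n%:~R *: v -> v = 0.
Proof. by case: HV => _ [_ [_ [_ [_ [_ [_ [_ [_ [_ [_ H]]]]]]]]]]. Qed.
Lemma Ygr v : exists s : seq (int * V),
      (forall p, p \in s -> Lop Y om 0 p.2 = p.1%:~R *: p.2) /\
      v = \sum_(p <- s) p.2.
Proof. by case: HV => _ [_ [_ [_ [_ [_ [_ [_ [_ [H _]]]]]]]]]. Qed.

Lemma L0lin : islin (Lop Y om 0).
Proof. exact: Ylin. Qed.

Lemma comm_L0 u (k m : int) w : Lop Y om 0 u = k%:~R *: u ->
  Lop Y om 0 (Y u m w) = Y u m (Lop Y om 0 w) + (k - m - 1)%:~R *: Y u m w.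
Proof.
move=> Hu.
have [N1 H1] := Ytr om u; have [N2 H2] := Ytr u w; have [N3 H3] := Ytr om w.
have B := Ybor om u w 1 m 0 (absz N1 + absz (N2 - m) + absz N3).+2.
lapply B; clear B; last first.
  move=> i hi; split; first by apply: H1; lia.
  split; first by apply: H2; lia.
  by apply: H3; lia.
rewrite big_ord_recl big_ord_recl big1 ?addr0; last first.
  by move=> i _; rewrite gbinom1 ?scale0r.
rewrite big_ord_recl big1 ?addr0; last first.
  by move=> i _; rewrite gbinom0 ?mulr0 ?scale0r.
rewrite /= !gbinom_0 gbinom11 expr0 mulr1 !scale1r.
have e1 : Y (Y om (0 + (bump 0 0)%:Z) u) (1 + m - (bump 0 0)%:Z) w = k%:~R *: Y u m w.
  have -> : Y om (0 + (bump 0 0)%:Z) u = k%:~R *: u := Hu.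
  have -> : (1 + m - (bump 0 0)%:Z) = m by rewrite /bump /=; lia.
  exact: (linZ (Ylinl m w)).
have e2 : Y (Y om 0 u) (1 + m) w = - (1+m)%:~R *: Y u m w.
  have -> : Y om 0 u = Lop Y om (-1) u by [].
  by rewrite Yder; have -> : (1 + m - 1) = m by lia.
rewrite e1 e2 => H.
change (Y om 1 (Y u m w) = Y u m (Y om 1 w) + (k - m - 1)%:~R *: Y u m w).
rewrite -[Y om 1 (Y u m w)](subrK (Y u m (Y om 1 w))) -H.
rewrite addrC; congr (_ + _); rewrite -scalerDl; congr (_ *: _).
rewrite !intrD !intrN; ring.
Qed.

Lemma eig_sub (k : int) : subspace (fun w => Lop Y om 0 w = k%:~R *: w).
Proof.
split; first by rewrite (lin0 L0lin) scaler0.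
move=> a x y hx hy; rewrite L0lin hx hy scalerA mulrC -scalerA -scalerDr //.
Qed.

Lemma exist_dec (N0 : int) (s : seq (int * V)) :
  (forall p, p \in s -> Lop Y om 0 p.2 = p.1%:~R *: p.2) ->
  exists (t : seq int) (g : int -> V), uniq t /\
    (forall i, i \in t -> Lop Y om 0 (g i) = (i + N0)%:~R *: g i) /\
    \sum_(p <- s) p.2 = \sum_(i <- t) g i.
Proof.
elim: s => [|p s IH] Hs.
  by exists [::], (fun _ => 0); rewrite !big_nil.
have [t [g [ut [Hg Hsum]]]] : exists (t : seq int) (g : int -> V), uniq t /\
    (forall i, i \in t -> Lop Y om 0 (g i) = (i + N0)%:~R *: g i) /\
    \sum_(p <- s) p.2 = \sum_(i <- t) g i.
  by apply: IH => q hq; apply: Hs; rewrite inE hq orbT.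
have Hp : Lop Y om 0 p.2 = p.1%:~R *: p.2 by apply: Hs; rewrite inE eqxx.
set j := p.1 - N0.
have Hp' : Lop Y om 0 p.2 = (j + N0)%:~R *: p.2 by rewrite /j subrK.
rewrite big_cons Hsum.
case: (boolP (j \in t)) => jt.
  exists t, (fun i => if i == j then g j + p.2 else g i); split => //; split.
    move=> i it; case: eqP => [->|_]; last exact: Hg.
    by have := (eig_sub (j + N0)).2 1 (g j) p.2 (Hg j jt) Hp'; rewrite scale1r.
  rewrite (bigD1_seq j jt ut) (bigD1_seq j jt ut) /= eqxx.
  rewrite [in RHS](eq_bigr g) => [|i /negPf -> //].
  by rewrite addrA (addrC p.2).
exists (j :: t), (fun i => if i == j then p.2 else g i); split; first by rewrite /= jt.
split.
  move=> i; rewrite inE; case: eqP => [->|_] //= it; exact: Hg.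
rewrite big_cons eqxx; congr (_ + _); apply: eq_big_seq => i it.
by case: eqP => // e; rewrite -e it in jt.
Qed.

Lemma indep (N0 : int) (t : seq int) (g : int -> V) : uniq t ->
  (forall i, i \in t -> Lop Y om 0 (g i) = (i + N0)%:~R *: g i) ->
  \sum_(i <- t) g i = 0 -> forall i, i \in t -> g i = 0.
Proof.
elim: t g => [|j t IH] g //= /andP [jt ut] Hg.
rewrite big_cons => hs.
pose g2 i := ((i + N0)%:~R - (j + N0)%:~R) *: g i.
have Hg2 : forall i, i \in t -> Lop Y om 0 (g2 i) = (i + N0)%:~R *: g2 i.
  move=> i it; rewrite /g2 (linZ L0lin) Hg ?inE ?it ?orbT //.
  by rewrite !scalerA mulrC.
have hs2 : \sum_(i <- t) g2 i = 0.
  have := congr1 (fun x => Lop Y om 0 x - (j + N0)%:~R *: x) hs.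
  rewrite /= (linD L0lin) scalerDr Hg ?inE ?eqxx // opprD addrACA subrr add0r.
  rewrite (lin_sum L0lin) scaler_sumr -sumrB (lin0 L0lin) scaler0 subrr => H; apply: etrans H.
  rewrite big_seq [RHS]big_seq; apply: eq_bigr => i it; rewrite /g2 Hg ?inE ?it ?orbT // scalerBl //.
have H2 := IH g2 ut Hg2 hs2.
have Ht : forall i, i \in t -> g i = 0.
  move=> i it; have := H2 i it; rewrite /g2 => /eqP; rewrite scaler_eq0.
  case/orP => /eqP // /eqP; rewrite subr_eq0 eqr_int => /eqP e.
  have e' : i = j by lia.
  by rewrite -e' it in jt.
have Hj : g j = 0.
  by move: hs; rewrite big1_seq ?addr0 // => i /andP [_ it]; apply: Ht.
by move=> i; rewrite inE; case/orP => [/eqP -> //|]; apply: Ht.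
Qed.

Lemma V_in_mod : simple_VOA Y -> in_modV Y vac om Y.
Proof.
move=> [[v0 v0n] Hsimp]; split.
  split; first by move=> u n a w w' _; apply: Ylin.
  split; first by move=> u u' n a w _ _; apply: Ylinl.
  split; first by move=> u w _; apply: Ytr.
  by split; [apply: Yvac | move=> u v w _ _; apply: Ybor].
split.
  have [N0 HN0] := Ylow.
  exists (fun n w => Lop Y om 0 w = (n + N0)%:~R *: w); split.
    by move=> n; apply: eig_sub.
  split.
    by move=> n w hn hw; apply: (HN0 (n + N0)) => //; lia.
  split.
    split.
      move=> w; have [s [Hs ->]] := Ygr w.
      have [t [g [ut [Hg Hsum]]]] := exist_dec N0 s Hs.
      by exists t, g; split.
    move=> t g ut Hg hs i it; exact: (indep N0 t g ut Hg hs).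
  move=> u k m n w _ Hu Hw; rewrite (comm_L0 u k m w Hu) Hw (linZ (Ylin u m)) -scalerDl.
  by congr (_ *: _); rewrite -!intrD; congr (_%:~R); lia.
exists 1%N, (fun i w => if i == 0%N then w = 0 else True); split.
  case=> [|i] /=; last by split; first split.
  split; first split => //.
    by move=> a x y -> ->; rewrite scaler0 addr0.
  by move=> u n w _ ->; exact: (lin0 (Ylin u n)).
split; first by [].
split; first by [].
case=> // _; split; first by [].
split; first by exists v0.
move=> U HU _ _; case: (Hsimp U HU) => [H|H]; [left|right] => w /=; auto.
Qed.

Lemma main_thm : simple_VOA Y -> forall W, subVOA_same_virasoro Y vac om W ->
  rational_VOA Y vac om W -> projective_modV Y vac om Y.
Proof.
move=> Hs W [Wsub [Wvac [Wom Wclos]]] Hrat; split; first exact: V_in_mod.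
move=> X YX f [HXm [HXg HXc]] [Hfl Hfh] Hsurj.
have Hfh' : forall u n x, f (YX u n x) = Y u n (f x) by move=> u n x; apply: Hfh.
have HmW : is_module Y vac W YX.
  case: HXm => [h1 [h2 [h3 [h4 h5]]]]; split.
    by move=> *; apply: h1.
  split; first by move=> *; apply: h2.
  split; first by move=> *; apply: h3.
  by split => // *; apply: h5.
have HgW : ngradable Y om W YX.
  case: HXg => G [h1 [h2 [h3 h4]]]; exists G; do 3!(split => //).
  by move=> *; apply: h4.
have [I [F [HF [Hspan _]]]] := Hrat X YX HmW HgW.
have [x0 fx0] := Hsurj vac.
have [s [h [Hh ex0]]] := Hspan x0.
have [C [[_ HCY] [Cinj [z [Cz fz]]]]] :=
  @compl W X YX HXm f Hfl Hfh' I F HF s h Hh.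
rewrite -ex0 fx0 in fz.
have Lz : YX om 0 z = 0.
  apply: Cinj; first exact: HCY.
  by rewrite Hfh' fz creat0.
have Hvl := vaclike X YX HXm z Lz.
exists (fun v => YX v (-1) z); split.
  split; first exact: (YXlinl X YX HXm).
  by move=> u n v _; apply: vac_hom.
by move=> p; rewrite Hfh' fz creat.
Qed.
End VOA.

Theorem theorem13 (R : realType) (V : lmodType R[i])
    (Y : V -> int -> V -> V) (vac om : V) (c : R[i]) (W : V -> Prop) :
  is_VOA Y vac om c -> simple_VOA Y ->
  subVOA_same_virasoro Y vac om W -> rational_VOA Y vac om W ->
  projective_modV Y vac om Y.
Proof.
move=> HV Hs HW Hrat; exact: (@main_thm R V Y vac om c HV Hs W HW Hrat).
Qed.
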